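(* Fix $V_{\sf P}\ge0$. Then $$\lim_{\delta\to1}\lim_{p\to0}\frac{{\sf Eng}({\sf PEAR})}{{\sf Eng}({\sf APP})}=1,\qquad \lim_{\delta\to1}\lim_{p\to0}\frac{{\sf Util}({\sf PEAR})}{{\sf Util}({\sf APP})}=1+\frac{1}{\ln(1+2e^{V_{\sf P}})}.$$
   Context: Model. Time $t=0,1,2,\dots$, discount factor $\delta\in[0,1)$. Two item types, popular ${\sf P}$ and niche ${\sf N}$, infinitely many items each; at each time $t$ the platform recommends a set $\pi_t$ of two fresh items of chosen types. Utility of item $i$: $u_i=V_{\tau(i)}+\epsilon_i$; outside option: $u_\emptyset=\epsilon_\emptyset$; all noises i.i.d. Gumbel with scale $1$ and mean $0$. User chooses $c_t=\arg\max_{j\in\pi_t\cup\{\emptyset\}}u_j$. $V_{\sf P}$ is a known constant; $V_{\sf N}$ is drawn once, fixed over time, independent of noise, with $\mathbb P(V_{\sf N}=(1-p)/p)=p$, $\mathbb P(V_{\sf N}=-1)=1-p$, $p\in(0,1)$. ${\sf Eng}(\pi)=\sum_{t\ge0}\delta^t\mathbb P(c_t\ne\emptyset)$, ${\sf Util}(\pi)=\sum_{t\ge0}\delta^t\mathbb E[\max_{j\in\pi_t\cup\{\emptyset\}}u_j]$ (expectations also over $V_{\sf N}$). ${\sf APP}$ recommends two popular items at every time. Policy ${\sf PEAR}$: let $\rho_1=\frac{e^{(1-p)/p}}{1+e^{V_{\sf P}}+e^{(1-p)/p}}$, $\rho_2=\frac{e^{-1}}{1+e^{V_{\sf P}}+e^{-1}}$.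 Maintain counters $S,F$ (initially $0$) and $p_0=p$. At each time $t$: if $p_t\ge p$, recommend one popular and one niche item; if the niche item is chosen increment $S$, otherwise increment $F$. If $p_t<p$, recommend two popular items. Then set $p_{t+1}=\left(1+\frac{1-p}{p}\cdot\frac{\rho_2^S(1-\rho_2)^F}{\rho_1^S(1-\rho_1)^F}\right)^{-1}$. *)

(* Defs.v *)
From Stdlib Require Import Reals.
From Coquelicot Require Import Coquelicot.
Open Scope R_scope.

(* ---------- Multinomial-logit closed forms of the Gumbel choice model ----------
   A recommended set of two items with mean utilities v1, v2, plus the outside
   option (mean utility 0); all noises i.i.d. Gumbel(scale 1, mean 0). *)
Definition denom2 (v1 v2 : R) : R := 1 + exp v1 + exp v2.

Definition prob_choose2 (v1 v2 : R) : R := exp v2 / denom2 v1 v2.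

(* P(c_t <> outside option) *)
Definition prob_engage2 (v1 v2 : R) : R := 1 - 1 / denom2 v1 v2.

(* E[max_{j in pi_t u {outside}} u_j]  (mean-zero Gumbel noise) *)
Definition exp_max_util2 (v1 v2 : R) : R := ln (denom2 v1 v2).

Definition vN_hi (p : R) : R := (1 - p) / p.
Definition vN_lo : R := -1.

Definition rho1 (VP p : R) : R := exp (vN_hi p) / (1 + exp VP + exp (vN_hi p)).
Definition rho2 (VP : R) : R := exp (-1) / (1 + exp VP + exp (-1)).

Definition pear_belief (VP p : R) (S F : nat) : R :=
  match S, F with
  | O, O => p
  | _, _ =>
    / (1 + (1 - p) / p *
           ((rho2 VP ^ S * (1 - rho2 VP) ^ F) /
            (rho1 VP p ^ S * (1 - rho1 VP p) ^ F)))
  end.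

(* Expected discounted reward of PEAR over the first T periods, started from
   counters (S,F), conditionally on V_N = vN; rew v1 v2 is the per-period
   reward of recommending items with mean utilities v1, v2. *)
Fixpoint pear_val (rew : R -> R -> R) (VP p delta vN : R) (T S F : nat) : R :=
  match T with
  | O => 0
  | S T' =>
    if Rle_dec p (pear_belief VP p S F) then
      (* recommend one popular and one niche item *)
      rew VP vN + delta *
        (prob_choose2 VP vN * pear_val rew VP p delta vN T' (S + 1)%nat F
         + (1 - prob_choose2 VP vN) * pear_val rew VP p delta vN T' S (F + 1)%nat)
    else
      (* recommend two popular items; counters unchanged *)
      rew VP VP + delta * pear_val rew VP p delta vN T' S F
  end.

Definition pear_obj (rew : R -> R -> R) (VP delta p : R) : R :=
  p * real (Lim_seq (fun T => pear_val rew VP p delta (vN_hi p) T 0 0))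
  + (1 - p) * real (Lim_seq (fun T => pear_val rew VP p delta vN_lo T 0 0)).

(* APP: two popular items every period. *)
Fixpoint app_val (rew : R -> R -> R) (VP delta : R) (T : nat) : R :=
  match T with
  | O => 0
  | S T' => rew VP VP + delta * app_val rew VP delta T'
  end.

Definition app_obj (rew : R -> R -> R) (VP delta : R) : R :=
  real (Lim_seq (fun T => app_val rew VP delta T)).

Definition Eng_PEAR (VP delta p : R) : R := pear_obj prob_engage2 VP delta p.
Definition Util_PEAR (VP delta p : R) : R := pear_obj exp_max_util2 VP delta p.
Definition Eng_APP (VP delta : R) : R := app_obj prob_engage2 VP delta.
Definition Util_APP (VP delta : R) : R := app_obj exp_max_util2 VP delta.

(* Main.v *)
Require Import Defs.
From Stdlib Require Import Reals Lra Lia.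
From Coquelicot Require Import Coquelicot.
Open Scope R_scope.

Fixpoint gval (d : nat -> nat -> bool) (a b q dl : R) (T s f : nat) : R :=
  match T with
  | O => 0
  | Datatypes.S T' =>
    if d s f then a + dl * (q * gval d a b q dl T' (s+1) f + (1-q) * gval d a b q dl T' s (f+1))
    else b + dl * gval d a b q dl T' s f
  end.

Definition dp (VP p : R) (s f : nat) : bool :=
  if Rle_dec p (pear_belief VP p s f) then true else false.

Lemma pear_gval rew VP p dl vN T s f :
  pear_val rew VP p dl vN T s f =
  gval (dp VP p) (rew VP vN) (rew VP VP) (prob_choose2 VP vN) dl T s f.
Proof.
  revert s f; induction T; intros s f; simpl; auto.
  unfold dp. destruct Rle_dec; rewrite ?IHT; auto.
Qed.

Fixpoint pop (b dl : R) (T : nat) : R :=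
  match T with O => 0 | Datatypes.S T' => b + dl * pop b dl T' end.

Lemma app_pop rew VP dl T : app_val rew VP dl T = pop (rew VP VP) dl T.
Proof. induction T; simpl; auto. rewrite IHT; auto. Qed.

Lemma gval_false d a b q dl T s f : d s f = false -> gval d a b q dl T s f = pop b dl T.
Proof. intro H; induction T; simpl; auto. rewrite H, IHT; auto. Qed.

Lemma pop_closed b dl T : dl <> 1 -> pop b dl T = b / (1 - dl) - b / (1 - dl) * dl ^ T.
Proof.
  intro H. assert (1 - dl <> 0) by lra.
  induction T; simpl. field; auto. rewrite IHT. field; auto.
Qed.

Lemma pop_lim b dl : 0 <= dl < 1 -> is_lim_seq (pop b dl) (b / (1 - dl)).
Proof.
  intro H.
  apply is_lim_seq_ext with (u := fun T => b / (1 - dl) - b / (1 - dl) * dl ^ T).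
  { intro n; rewrite pop_closed; auto; lra. }
  assert (K : is_lim_seq (fun T => b / (1 - dl) - b / (1 - dl) * dl ^ T) (b / (1 - dl) - b / (1 - dl) * 0)).
  { apply is_lim_seq_minus'. apply is_lim_seq_const.
    apply (is_lim_seq_scal_l _ _ 0). apply is_lim_seq_geom. rewrite Rabs_pos_eq; lra. }
  rewrite Rmult_0_r, Rminus_0_r in K. exact K.
Qed.

Section Bounds.
Variables (a b q dl M : R).
Hypotheses (Hdl : 0 <= dl < 1) (Hq : 0 <= q <= 1) (Ha : Rabs a <= M) (Hb : Rabs b <= M).

Lemma gval_abs (d : nat -> nat -> bool) T s f : Rabs (gval d a b q dl T s f) <= M / (1 - dl).
Proof.
  assert (HM : 0 <= M) by (pose proof (Rabs_pos a); lra).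
  assert (H0 : 0 <= M / (1 - dl)) by (apply Rdiv_le_0_compat; lra).
  revert s f; induction T; intros s f; simpl.
  - rewrite Rabs_R0; auto.
  - assert (E : M / (1 - dl) = M + dl * (M / (1 - dl))) by (field; lra).
    destruct (d s f).
    + rewrite E. eapply Rle_trans; [apply Rabs_triang|]. apply Rplus_le_compat; auto.
      rewrite Rabs_mult, Rabs_pos_eq by lra. apply Rmult_le_compat_l; [lra|].
      eapply Rle_trans; [apply Rabs_triang|]. rewrite !Rabs_mult, (Rabs_pos_eq q), (Rabs_pos_eq (1-q)) by lra.
      pose proof (IHT (s+1)%nat f). pose proof (IHT s (f+1)%nat). nra.
    + rewrite E. eapply Rle_trans; [apply Rabs_triang|]. apply Rplus_le_compat; auto.
      rewrite Rabs_mult, Rabs_pos_eq by lra. apply Rmult_le_compat_l; [lra|]. auto.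
Qed.

Lemma gval_step (d : nat -> nat -> bool) T s f : Rabs (gval d a b q dl (Datatypes.S T) s f - gval d a b q dl T s f) <= M * dl ^ T.
Proof.
  revert s f; induction T; intros s f.
  - simpl gval. simpl pow. destruct (d s f); [replace (a + dl * (q * 0 + (1 - q) * 0) - 0) with a by ring | replace (b + dl * 0 - 0) with b by ring]; lra.
  - change (gval d a b q dl (Datatypes.S (Datatypes.S T)) s f) with
      (if d s f then a + dl * (q * gval d a b q dl (Datatypes.S T) (s+1) f + (1-q) * gval d a b q dl (Datatypes.S T) s (f+1))
    else b + dl * gval d a b q dl (Datatypes.S T) s f).
    change (gval d a b q dl (Datatypes.S T) s f) with
      (if d s f then a + dl * (q * gval d a b q dl T (s+1) f + (1-q) * gval d a b q dl T s (f+1))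
    else b + dl * gval d a b q dl T s f) at 2.
    simpl pow. destruct (d s f).
    + pose proof (IHT (s+1)%nat f). pose proof (IHT s (f+1)%nat).
      match goal with |- Rabs ?e <= _ => replace e with
        (dl * (q * (gval d a b q dl (Datatypes.S T) (s+1) f - gval d a b q dl T (s+1) f)
         + (1-q) * (gval d a b q dl (Datatypes.S T) s (f+1) - gval d a b q dl T s (f+1)))) by ring end.
      rewrite Rabs_mult, Rabs_pos_eq by lra.
      assert (Rabs (q * (gval d a b q dl (Datatypes.S T) (s+1) f - gval d a b q dl T (s+1) f)
         + (1-q) * (gval d a b q dl (Datatypes.S T) s (f+1) - gval d a b q dl T s (f+1))) <= M * dl ^ T).
      { eapply Rle_trans; [apply Rabs_triang|]. rewrite !Rabs_mult, (Rabs_pos_eq q), (Rabs_pos_eq (1-q)) by lra.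
        nra. }
      replace (M * (dl * dl ^ T)) with (dl * (M * dl ^ T)) by ring.
      apply Rmult_le_compat_l; lra.
    + pose proof (IHT s f).
      match goal with |- Rabs ?e <= _ => replace e with
        (dl * (gval d a b q dl (Datatypes.S T) s f - gval d a b q dl T s f)) by ring end.
      rewrite Rabs_mult, Rabs_pos_eq by lra.
      replace (M * (dl * dl ^ T)) with (dl * (M * dl ^ T)) by ring.
      apply Rmult_le_compat_l; lra.
Qed.

Lemma gval_pert (d d' : nat -> nat -> bool) (N : nat) :
  (forall s f, (s + f < N)%nat -> d s f = d' s f) ->
  forall T s f k, (s + f + k <= N)%nat ->
  Rabs (gval d a b q dl T s f - gval d' a b q dl T s f) <= 2 * M * dl ^ k / (1 - dl).
Proof.
  intros Hag T. induction T; intros s f k Hk.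
  - simpl. rewrite Rminus_0_r, Rabs_R0. apply Rdiv_le_0_compat; [|lra].
    assert (0 <= M) by (pose proof (Rabs_pos a); lra).
    pose proof (pow_le dl k (proj1 Hdl)). nra.
  - destruct k as [|k].
    + simpl pow. eapply Rle_trans; [apply Rabs_triang|]. rewrite Rabs_Ropp.
      pose proof (gval_abs d (Datatypes.S T) s f). pose proof (gval_abs d' (Datatypes.S T) s f).
      replace (2 * M * 1 / (1 - dl)) with (M / (1 - dl) + M / (1 - dl)) by (field; lra). lra.
    + simpl gval. rewrite <- (Hag s f) by lia. simpl pow. destruct (d s f).
      * pose proof (IHT (s+1)%nat f k ltac:(lia)). pose proof (IHT s (f+1)%nat k ltac:(lia)).
        match goal with |- Rabs ?e <= _ => replace e with
          (dl * (q * (gval d a b q dl T (s+1) f - gval d' a b q dl T (s+1) f)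
           + (1-q) * (gval d a b q dl T s (f+1) - gval d' a b q dl T s (f+1)))) by ring end.
        rewrite Rabs_mult, Rabs_pos_eq by lra.
        assert (Rabs (q * (gval d a b q dl T (s+1) f - gval d' a b q dl T (s+1) f)
           + (1-q) * (gval d a b q dl T s (f+1) - gval d' a b q dl T s (f+1))) <= 2 * M * dl ^ k / (1 - dl)).
        { eapply Rle_trans; [apply Rabs_triang|]. rewrite !Rabs_mult, (Rabs_pos_eq q), (Rabs_pos_eq (1-q)) by lra.
          nra. }
        replace (2 * M * (dl * dl ^ k) / (1 - dl)) with (dl * (2 * M * dl ^ k / (1 - dl))) by (field; lra).
        apply Rmult_le_compat_l; lra.
      * pose proof (IHT s f (Datatypes.S k) Hk). simpl pow in H.
        match goal with |- Rabs ?e <= _ => replace e with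
          (dl * (gval d a b q dl T s f - gval d' a b q dl T s f)) by ring end.
        rewrite Rabs_mult, Rabs_pos_eq by lra.
        assert (0 <= 2 * M * (dl * dl ^ k) / (1 - dl)).
        { apply Rdiv_le_0_compat; [|lra]. assert (0 <= M) by (pose proof (Rabs_pos a); lra).
          pose proof (pow_le dl (Datatypes.S k) (proj1 Hdl)). simpl in H1. nra. }
        pose proof (Rabs_pos (gval d a b q dl T s f - gval d' a b q dl T s f)). nra.
Qed.
End Bounds.

Lemma gval_nonneg d a b q dl T s f : 0 <= a -> 0 <= b -> 0 <= q <= 1 -> 0 <= dl ->
  0 <= gval d a b q dl T s f.
Proof.
  intros Ha Hb Hq Hdl. revert s f; induction T; intros s f; simpl. lra.
  destruct (d s f).
  - pose proof (IHT (s+1)%nat f). pose proof (IHT s (f+1)%nat).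
    assert (0 <= q * gval d a b q dl T (s + 1) f + (1 - q) * gval d a b q dl T s (f + 1)) by nra. nra.
  - pose proof (IHT s f). nra.
Qed.

Lemma gval_lower d a b q dl T s : 0 <= a -> 0 <= b -> 0 <= q <= 1 -> 0 <= dl < 1 ->
  (forall s', d s' 0%nat = true) ->
  a * (1 - (dl * q) ^ T) / (1 - dl * q) <= gval d a b q dl T s 0.
Proof.
  intros Ha Hb Hq Hdl Hd. assert (0 < 1 - dl * q) by nra.
  revert s; induction T; intros s; simpl.
  - replace (a * (1 - 1) / (1 - dl * q)) with 0 by (field; lra). lra.
  - rewrite Hd. pose proof (IHT (s+1)%nat). pose proof (gval_nonneg d a b q dl T s 1 Ha Hb Hq (proj1 Hdl)).
    replace (a * (1 - dl * q * (dl * q) ^ T) / (1 - dl * q)) with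
      (a + dl * q * (a * (1 - (dl * q) ^ T) / (1 - dl * q))) by (field; lra).
    assert (dl * q * (a * (1 - (dl * q) ^ T) / (1 - dl * q)) <= dl * q * gval d a b q dl T (s + 1) 0).
    { apply Rmult_le_compat_l; nra. }
    assert (0 <= dl * ((1 - q) * gval d a b q dl T s 1)) by (apply Rmult_le_pos; [lra| apply Rmult_le_pos; lra]).
    change (0 + 1)%nat with 1%nat. nra.
Qed.

Lemma geom_tele (u : nat -> R) M dl : 0 <= dl < 1 ->
  (forall n, Rabs (u (S n) - u n) <= M * dl ^ n) ->
  forall N k, Rabs (u (N + k)%nat - u N) <= M * (dl ^ N - dl ^ (N + k)) / (1 - dl).
Proof.
  intros Hdl Hs N k. induction k.
  - rewrite Nat.add_0_r. replace (u N - u N) with 0 by ring. rewrite Rabs_R0.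
    replace (M * (dl ^ N - dl ^ N) / (1 - dl)) with 0 by (field; lra). lra.
  - replace (N + S k)%nat with (S (N + k)) by lia.
    replace (u (S (N + k)) - u N) with ((u (S (N + k)) - u (N + k)%nat) + (u (N + k)%nat - u N)) by ring.
    eapply Rle_trans; [apply Rabs_triang|].
    pose proof (Hs (N + k)%nat).
    replace (M * (dl ^ N - dl ^ S (N + k)) / (1 - dl)) with
      (M * dl ^ (N + k) + M * (dl ^ N - dl ^ (N + k)) / (1 - dl)) by (simpl; field; lra).
    lra.
Qed.

Lemma geom_cauchy (u : nat -> R) M dl : 0 <= dl < 1 -> 0 <= M ->
  (forall n, Rabs (u (S n) - u n) <= M * dl ^ n) -> ex_finite_lim_seq u.
Proof.
  intros Hdl HM Hs. apply ex_lim_seq_cauchy_corr. intro eps.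
  destruct (pow_lt_1_zero dl ltac:(rewrite Rabs_pos_eq; lra) (eps * (1 - dl) / (2 * M + 1)))
    as [N HN].
  { apply Rdiv_lt_0_compat; [|lra]. pose proof (cond_pos eps). nra. }
  exists N. intros n m Hn Hm.
  assert (B : forall n, (N <= n)%nat -> Rabs (u n - u N) <= M * dl ^ N / (1 - dl)).
  { intros n' Hn'. replace n' with (N + (n' - N))%nat by lia.
    eapply Rle_trans; [apply geom_tele; eauto|].
    apply Rmult_le_compat_r. apply Rlt_le, Rinv_0_lt_compat; lra.
    pose proof (pow_le dl (N + (n' - N)) (proj1 Hdl)). nra. }
  pose proof (B n Hn). pose proof (B m Hm).
  replace (u n - u m) with ((u n - u N) - (u m - u N)) by ring.
  eapply Rle_lt_trans; [apply Rabs_triang|]. rewrite Rabs_Ropp.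
  specialize (HN N (le_n N)). rewrite Rabs_pos_eq in HN by (apply pow_le; lra).
  assert (2 * (M * dl ^ N / (1 - dl)) < eps).
  { apply Rmult_lt_compat_r with (r := (2*M+1)) in HN; [|lra].
    replace (eps * (1 - dl) / (2 * M + 1) * (2 * M + 1)) with (eps * (1 - dl)) in HN by (field; lra).
    assert (2 * (M * dl ^ N) < eps * (1 - dl)).
    { pose proof (pow_le dl N (proj1 Hdl)). nra. }
    replace (2 * (M * dl ^ N / (1 - dl))) with (2 * (M * dl ^ N) / (1 - dl)) by (field; lra).
    apply Rlt_div_l; lra. }
  lra.
Qed.

Lemma lim_close (u v : nat -> R) c : ex_finite_lim_seq u -> ex_finite_lim_seq v ->
  (forall n, Rabs (u n - v n) <= c) -> Rabs (real (Lim_seq u) - real (Lim_seq v)) <= c.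
Proof.
  intros [lu Hu] [lv Hv] H.
  rewrite (is_lim_seq_unique _ _ Hu), (is_lim_seq_unique _ _ Hv). simpl.
  pose proof (is_lim_seq_minus' _ _ _ _ Hu Hv) as Hm.
  apply Rabs_le. split.
  - assert (K := is_lim_seq_le (fun _ => - c) (fun n => u n - v n) (-c) _ ltac:(intro n; specialize (H n); apply Rabs_le_between in H; simpl; lra) (is_lim_seq_const _) Hm). simpl in K. lra.
  - assert (K := is_lim_seq_le (fun n => u n - v n) (fun _ => c) _ c ltac:(intro n; specialize (H n); apply Rabs_le_between in H; simpl; lra) Hm (is_lim_seq_const _)). simpl in K. lra.
Qed.

Lemma lim_ge (u : nat -> R) (v : nat -> R) (l : R) : ex_finite_lim_seq u -> is_lim_seq v l ->
  (forall n, v n <= u n) -> l <= real (Lim_seq u).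
Proof.
  intros [lu Hu] Hv H. rewrite (is_lim_seq_unique _ _ Hu). simpl.
  assert (K := is_lim_seq_le _ _ _ _ H Hv Hu). exact K.
Qed.

Lemma lim_le_c (u : nat -> R) c : ex_finite_lim_seq u ->
  (forall n, u n <= c) -> real (Lim_seq u) <= c.
Proof.
  intros [lu Hu] H. rewrite (is_lim_seq_unique _ _ Hu). simpl.
  assert (K := is_lim_seq_le _ _ _ _ H Hu (is_lim_seq_const c)). exact K.
Qed.

Lemma lim_scal (u : nat -> R) (a l : R) : is_lim_seq u l -> is_lim_seq (fun n => a * u n) (a * l).
Proof. intro H. exact (is_lim_seq_scal_l u a l H). Qed.

Lemma gval_conv d a b q dl s f : 0 <= dl < 1 -> 0 <= q <= 1 ->
  ex_finite_lim_seq (fun T => gval d a b q dl T s f).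
Proof.
  intros Hdl Hq. apply (geom_cauchy _ (Rabs a + Rabs b) dl Hdl).
  pose proof (Rabs_pos a); pose proof (Rabs_pos b); lra.
  intro n. apply (gval_step a b q dl); auto; pose proof (Rabs_pos a); pose proof (Rabs_pos b); lra.
Qed.

Definition dstar (s f : nat) : bool := match f with O => true | _ => false end.

Lemma dstar_indep a b q dl T s : gval dstar a b q dl T s 0 = gval dstar a b q dl T 0 0.
Proof.
  revert s; induction T; intros s; simpl; auto.
  rewrite (IHT (s+1)%nat), (IHT 1%nat).
  rewrite (gval_false dstar a b q dl T s 1), (gval_false dstar a b q dl T 0 1); reflexivity.
Qed.

Lemma dstar_rec a b q dl T : gval dstar a b q dl (S T) 0 0 =
  a + dl * (q * gval dstar a b q dl T 0 0 + (1 - q) * pop b dl T).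
Proof.
  simpl. rewrite dstar_indep. rewrite (gval_false dstar a b q dl T 0 1); reflexivity.
Qed.

Definition wval (a b q dl : R) : R := (a + dl * (1 - q) * b / (1 - dl)) / (1 - dl * q).

Lemma dstar_lim a b q dl : 0 <= dl < 1 -> 0 <= q <= 1 ->
  is_lim_seq (fun T => gval dstar a b q dl T 0 0) (wval a b q dl).
Proof.
  intros Hdl Hq. destruct (gval_conv dstar a b q dl 0 0 Hdl Hq) as [l Hl].
  assert (H1 := proj1 (is_lim_seq_incr_1 _ _) Hl).
  assert (H2 : is_lim_seq (fun T => a + dl * (q * gval dstar a b q dl T 0 0 + (1 - q) * pop b dl T))
                 (a + dl * (q * l + (1 - q) * (b / (1 - dl))))).
  { apply is_lim_seq_plus'. apply is_lim_seq_const. apply lim_scal. apply is_lim_seq_plus'.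
    apply lim_scal; auto. apply lim_scal. apply pop_lim; auto. }
  assert (E : l = a + dl * (q * l + (1 - q) * (b / (1 - dl)))).
  { apply is_lim_seq_ext with (v := fun T => gval dstar a b q dl (S T) 0 0) in H2.
    2: { intro n. rewrite dstar_rec. reflexivity. }
    pose proof (is_lim_seq_unique _ _ H1). pose proof (is_lim_seq_unique _ _ H2).
    rewrite H in H0. injection H0. auto. }
  replace (wval a b q dl) with l. auto.
  unfold wval. assert (0 < 1 - dl * q) by nra.
  assert (E2 : l * (1 - dl * q) = a + dl * (1 - q) * b / (1 - dl)).
  { unfold Rdiv in *. lra. }
  rewrite <- E2. field. lra.
Qed.

Lemma pow_le1 x k : 0 <= x <= 1 -> x ^ k <= 1.
Proof. intro H; induction k; simpl. lra. pose proof (pow_le x k (proj1 H)). nra. Qed.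

Lemma pow_dec x m n : 0 <= x <= 1 -> (m <= n)%nat -> x ^ n <= x ^ m.
Proof.
  intros H Hmn. replace n with (m + (n - m))%nat by lia. rewrite pow_add.
  pose proof (pow_le1 x (n - m) H). pose proof (pow_le x m (proj1 H)). nra.
Qed.

Lemma div_lt1 a b : 0 < b -> a < b -> a / b < 1.
Proof. intros. apply Rlt_div_l; lra. Qed.
Lemma div_le1 a b : 0 < b -> a <= b -> a / b <= 1.
Proof. intros. apply Rle_div_l; lra. Qed.

Lemma rho2_bounds VP : 0 < rho2 VP < 1.
Proof.
  unfold rho2. pose proof (exp_pos VP). pose proof (exp_pos (-1)). split.
  apply Rdiv_lt_0_compat; lra. apply div_lt1; lra.
Qed.

Lemma rho1_bounds VP p : 0 < rho1 VP p < 1.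
Proof.
  unfold rho1. pose proof (exp_pos VP). pose proof (exp_pos (vN_hi p)). split.
  apply Rdiv_lt_0_compat; lra. apply div_lt1; lra.
Qed.

Lemma rho21 VP p : 0 < p < 1 -> rho2 VP <= rho1 VP p.
Proof.
  intro Hp. unfold rho1, rho2. pose proof (exp_pos VP).
  assert (exp (-1) <= exp (vN_hi p)).
  { left. apply exp_increasing. unfold vN_hi. apply Rlt_le_trans with 0. lra.
    apply Rdiv_le_0_compat; lra. }
  pose proof (exp_pos (-1)).
  apply Rle_div_l. pose proof (exp_pos (vN_hi p)); lra.
  unfold Rdiv. rewrite Rmult_assoc. rewrite (Rmult_comm (/ _)).
  rewrite <- Rmult_assoc. apply Rle_div_r. lra. nra.
Qed.

Lemma exph_ge p : 0 < p < 1 -> / p <= exp (vN_hi p).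
Proof.
  intro Hp. eapply Rle_trans; [|apply exp_ineq1_le]. unfold vN_hi.
  right. field. lra.
Qed.

Lemma one_m_rho1 VP p : 0 < p < 1 -> 1 - rho1 VP p <= (1 + exp VP) * p.
Proof.
  intro Hp. pose proof (exph_ge p Hp). pose proof (exp_pos VP).
  pose proof (exp_pos (vN_hi p)).
  unfold rho1. replace (1 - exp (vN_hi p) / (1 + exp VP + exp (vN_hi p))) with
    ((1 + exp VP) / (1 + exp VP + exp (vN_hi p))) by (field; lra).
  apply Rle_div_l. lra.
  assert (1 <= p * exp (vN_hi p)).
  { apply Rmult_le_compat_l with (r := p) in H; [|lra]. rewrite Rinv_r in H; lra. }
  nra.
Qed.

Lemma pear_belief_eq VP p s f : (s <> 0 \/ f <> 0)%nat ->
  pear_belief VP p s f = / (1 + (1 - p) / p *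
           ((rho2 VP ^ s * (1 - rho2 VP) ^ f) / (rho1 VP p ^ s * (1 - rho1 VP p) ^ f))).
Proof. intro H. destruct s, f; try reflexivity. lia. Qed.

Lemma belief_ge p r : 0 < p < 1 -> 0 <= r <= 1 -> p <= / (1 + (1 - p) / p * r).
Proof.
  intros Hp Hr. assert (0 <= (1 - p) / p) by (apply Rdiv_le_0_compat; lra).
  rewrite <- (Rinv_inv p) at 1. apply Rinv_le_contravar. nra.
  replace (/ p) with (1 + (1 - p) / p) by (field; lra). nra.
Qed.

Lemma belief_lt p r : 0 < p < 1 -> 1 < r -> / (1 + (1 - p) / p * r) < p.
Proof.
  intros Hp Hr. assert (0 < (1 - p) / p) by (apply Rdiv_lt_0_compat; lra).
  rewrite <- (Rinv_inv p) at 3. apply Rinv_lt_contravar.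
  apply Rmult_lt_0_compat. apply Rinv_0_lt_compat; lra. nra.
  replace (/ p) with (1 + (1 - p) / p) by (field; lra). nra.
Qed.

Lemma dp_s0 VP p s : 0 < p < 1 -> dp VP p s 0 = true.
Proof.
  intro Hp. unfold dp. destruct Rle_dec as [_|n]; auto. exfalso; apply n.
  destruct s. simpl. lra.
  rewrite pear_belief_eq by lia. apply belief_ge; auto.
  pose proof (rho1_bounds VP p). pose proof (rho2_bounds VP). pose proof (rho21 VP p Hp).
  simpl pow at 2 4. rewrite !Rmult_1_r.
  assert (0 < rho1 VP p ^ S s) by (apply pow_lt; lra).
  assert (0 <= rho2 VP ^ S s) by (apply pow_le; lra).
  assert (rho2 VP ^ S s <= rho1 VP p ^ S s) by (apply pow_incr; lra).
  split. apply Rdiv_le_0_compat; lra. apply div_le1; lra.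
Qed.

Lemma dp_agree VP N : exists eta, 0 < eta /\ forall p, 0 < p < eta ->
  forall s f, (s + f < N)%nat -> dp VP p s f = dstar s f.
Proof.
  set (K := (rho2 VP * (1 - rho2 VP)) ^ N).
  pose proof (rho2_bounds VP).
  assert (HK : 0 < K) by (apply pow_lt; nra).
  pose proof (exp_pos VP).
  exists (Rmin (1/2) (K / (2 * (1 + exp VP)))). split.
  { apply Rmin_pos. lra. apply Rdiv_lt_0_compat; lra. }
  intros p Hp s f Hsf.
  assert (Hp1 : 0 < p < 1) by (pose proof (Rmin_l (1/2) (K / (2 * (1 + exp VP)))); lra).
  destruct f as [|f].
  - apply dp_s0; auto.
  - simpl. unfold dp. destruct Rle_dec as [r|]; auto. exfalso.
    rewrite pear_belief_eq in r by lia. revert r. apply Rlt_not_le. apply belief_lt; auto.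
    pose proof (rho1_bounds VP p).
    pose proof (one_m_rho1 VP p Hp1).
    assert (Hpk : p < K / (2 * (1 + exp VP))) by (pose proof (Rmin_r (1/2) (K / (2 * (1 + exp VP)))); lra).
    assert (HH1 : 1 - rho1 VP p < K).
    { apply Rmult_lt_compat_l with (r := 1 + exp VP) in Hpk; [|lra].
      replace ((1 + exp VP) * (K / (2 * (1 + exp VP)))) with (K / 2) in Hpk by (field; lra). lra. }
    assert (Hnum : K <= rho2 VP ^ s * (1 - rho2 VP) ^ S f).
    { unfold K. rewrite Rpow_mult_distr. apply Rmult_le_compat.
      apply pow_le; lra. apply pow_le; lra. apply pow_dec; lra || lia. apply pow_dec; lra || lia. }
    assert (Hden : rho1 VP p ^ s * (1 - rho1 VP p) ^ S f <= 1 - rho1 VP p).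
    { simpl pow at 2. pose proof (pow_le1 (rho1 VP p) s ltac:(lra)).
      pose proof (pow_le1 (1 - rho1 VP p) f ltac:(lra)).
      pose proof (pow_le (rho1 VP p) s ltac:(lra)). pose proof (pow_le (1 - rho1 VP p) f ltac:(lra)).
      assert (0 <= (1 - rho1 VP p) * (1 - rho1 VP p) ^ f <= 1 - rho1 VP p) by (split; nra). nra. }
    assert (Hden0 : 0 < rho1 VP p ^ s * (1 - rho1 VP p) ^ S f).
    { apply Rmult_lt_0_compat; apply pow_lt; lra. }
    apply Rlt_div_r; auto. lra.
Qed.

Lemma ev0 (P : R -> Prop) : (exists eta, 0 < eta /\ forall p, 0 < p < eta -> P p) -> at_right 0 P.
Proof.
  intros [eta [He H]]. exists (mkposreal eta He). intros y Hy Hpos. apply H. split; auto.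
  unfold ball in Hy; simpl in Hy; unfold AbsRing_ball, abs, minus, plus, opp in Hy; simpl in Hy.
  rewrite Ropp_0, Rplus_0_r, Rabs_pos_eq in Hy; lra.
Qed.

Lemma lim0_intro (f : R -> R) l :
  (forall eps, 0 < eps -> exists eta, 0 < eta /\ forall p, 0 < p < eta -> Rabs (f p - l) < eps) ->
  filterlim f (at_right 0) (locally l).
Proof.
  intro H. apply filterlim_locally. intro eps. apply ev0. destruct (H eps (cond_pos eps)) as [eta [He Hp]].
  exists eta; split; auto.
Qed.

Lemma squeeze {T} {F : (T -> Prop) -> Prop} {FF : Filter F} (f g h : T -> R) l :
  filterlim f F (locally l) -> filterlim g F (locally l) -> F (fun x => f x <= h x <= g x) ->
  filterlim h F (locally l).
Proof.
  intros Hf Hg Hb. apply filterlim_locally. intro eps.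
  apply filterlim_locally with (eps := eps) in Hf. apply filterlim_locally with (eps := eps) in Hg.
  generalize (filter_and _ _ Hf (filter_and _ _ Hg Hb)). apply filter_imp.
  intros x [H1 [H2 H3]]. change (Rabs (h x - l) < eps). change (Rabs (f x - l) < eps) in H1.
  change (Rabs (g x - l) < eps) in H2. apply Rabs_lt_between in H1. apply Rabs_lt_between in H2.
  apply Rabs_lt_between. lra.
Qed.

Lemma fl_plus {T} {F : (T -> Prop) -> Prop} {FF : Filter F} (f g : T -> R) a b :
  filterlim f F (locally a) -> filterlim g F (locally b) -> filterlim (fun x => f x + g x) F (locally (a + b)).
Proof. intros; eapply filterlim_comp_2; eauto. apply (filterlim_plus a b). Qed.

Lemma fl_mult {T} {F : (T -> Prop) -> Prop} {FF : Filter F} (f g : T -> R) a b :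
  filterlim f F (locally a) -> filterlim g F (locally b) -> filterlim (fun x => f x * g x) F (locally (a * b)).
Proof. intros; eapply filterlim_comp_2; eauto. apply (filterlim_mult a b). Qed.

Lemma fl_eq {T} {F : (T -> Prop) -> Prop} (f : T -> R) (a b : R) :
  filterlim f F (locally a) -> a = b -> filterlim f F (locally b).
Proof. intros H E; subst; auto. Qed.

Lemma fl_cont0 (g : R -> R) : continuity_pt g 0 -> filterlim g (at_right 0) (locally (g 0)).
Proof.
  intro H. apply continuity_pt_filterlim in H. eapply filterlim_filter_le_1; [|exact H].
  apply filter_le_within.
Qed.

Lemma fl_id0 : filterlim (fun p : R => p) (at_right 0) (locally 0).
Proof. apply (fl_cont0 (fun p => p)). reg. Qed.

Lemma q_bounds VP : 0 < prob_choose2 VP vN_lo < 1.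
Proof. exact (rho2_bounds VP). Qed.

Lemma lo_lim rew VP dl : 0 <= dl < 1 ->
  filterlim (fun p => real (Lim_seq (fun T => pear_val rew VP p dl vN_lo T 0 0))) (at_right 0)
    (locally (wval (rew VP vN_lo) (rew VP VP) (prob_choose2 VP vN_lo) dl)).
Proof.
  intro Hdl. set (a := rew VP vN_lo). set (b := rew VP VP). set (q := prob_choose2 VP vN_lo).
  assert (Hq : 0 <= q <= 1) by (pose proof (q_bounds VP); unfold q; lra).
  set (M := Rabs a + Rabs b).
  assert (HM : 0 <= M) by (unfold M; pose proof (Rabs_pos a); pose proof (Rabs_pos b); lra).
  apply lim0_intro. intros eps Heps.
  destruct (pow_lt_1_zero dl ltac:(rewrite Rabs_pos_eq; lra) (eps * (1 - dl) / (2 * M + 1)))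
    as [N HN].
  { apply Rdiv_lt_0_compat; [|lra]. nra. }
  destruct (dp_agree VP N) as [eta [He Hag]].
  exists eta; split; auto. intros p Hp.
  rewrite (Lim_seq_ext _ _ (fun T => pear_gval rew VP p dl vN_lo T 0 0)).
  replace (wval a b q dl) with (real (Lim_seq (fun T => gval dstar a b q dl T 0 0)))
    by (rewrite (is_lim_seq_unique _ _ (dstar_lim a b q dl Hdl Hq)); reflexivity).
  eapply Rle_lt_trans.
  { apply lim_close. apply gval_conv; auto. apply gval_conv; auto.
    intro T. apply (gval_pert a b q dl M Hdl Hq) with (N := N) (k := N).
    unfold M; pose proof (Rabs_pos b); lra. unfold M; pose proof (Rabs_pos a); lra.
    apply Hag; auto. lia. }
  specialize (HN N (le_n N)). rewrite Rabs_pos_eq in HN by (apply pow_le; lra).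
  apply Rmult_lt_compat_r with (r := (2*M+1)) in HN; [|lra].
  replace (eps * (1 - dl) / (2 * M + 1) * (2 * M + 1)) with (eps * (1 - dl)) in HN by (field; lra).
  assert (2 * M * dl ^ N < eps * (1 - dl)).
  { pose proof (pow_le dl N (proj1 Hdl)). nra. }
  apply Rlt_div_l; lra.
Qed.

Lemma lim_abs_bound (u : nat -> R) c : ex_finite_lim_seq u -> (forall n, Rabs (u n) <= c) ->
  Rabs (real (Lim_seq u)) <= c.
Proof.
  intros Hu H. pose proof (lim_close u (fun _ => 0) c Hu ltac:(exists 0; apply is_lim_seq_const)
    ltac:(intro n; rewrite Rminus_0_r; auto)).
  rewrite Lim_seq_const in H0. simpl in H0. rewrite Rminus_0_r in H0. auto.
Qed.

Lemma geom_lim2 A r : 0 <= r < 1 -> is_lim_seq (fun T => A * (1 - r ^ T) / (1 - r)) (A / (1 - r)).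
Proof.
  intro H.
  apply is_lim_seq_ext with (u := fun T => A / (1 - r) - A / (1 - r) * r ^ T).
  { intro n. field. lra. }
  assert (K : is_lim_seq (fun T => A / (1 - r) - A / (1 - r) * r ^ T) (A / (1 - r) - A / (1 - r) * 0)).
  { apply is_lim_seq_minus'. apply is_lim_seq_const.
    apply (is_lim_seq_scal_l _ _ 0). apply is_lim_seq_geom. rewrite Rabs_pos_eq; lra. }
  rewrite Rmult_0_r, Rminus_0_r in K. exact K.
Qed.

Lemma denom_ge1 v1 v2 : 1 < denom2 v1 v2.
Proof. unfold denom2. pose proof (exp_pos v1). pose proof (exp_pos v2). lra. Qed.

Lemma eng_bound v1 v2 : Rabs (prob_engage2 v1 v2) <= 1.
Proof.
  unfold prob_engage2. pose proof (denom_ge1 v1 v2).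
  assert (0 < 1 / denom2 v1 v2 < 1).
  { split. apply Rdiv_lt_0_compat; lra. apply div_lt1; lra. }
  rewrite Rabs_pos_eq; lra.
Qed.

Lemma util_pos v1 v2 : 0 < exp_max_util2 v1 v2.
Proof.
  unfold exp_max_util2. rewrite <- ln_1. apply ln_increasing. lra. apply denom_ge1.
Qed.

Lemma hi_eng VP dl : 0 <= dl < 1 ->
  filterlim (fun p => p * real (Lim_seq (fun T => pear_val prob_engage2 VP p dl (vN_hi p) T 0 0)))
    (at_right 0) (locally 0).
Proof.
  intro Hdl.
  apply squeeze with (f := fun p => p * (- (1 / (1 - dl)))) (g := fun p => p * (1 / (1 - dl))).
  - eapply fl_eq; [apply fl_mult; [apply fl_id0 | apply filterlim_const] | ring].
  - eapply fl_eq; [apply fl_mult; [apply fl_id0 | apply filterlim_const] | ring].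
  - apply ev0. exists 1. split. lra. intros p Hp.
    assert (Rabs (real (Lim_seq (fun T => pear_val prob_engage2 VP p dl (vN_hi p) T 0 0))) <= 1 / (1 - dl)).
    { rewrite (Lim_seq_ext _ _ (fun T => pear_gval _ VP p dl _ T 0 0)).
      apply lim_abs_bound. apply gval_conv; auto. pose proof (rho1_bounds VP p). unfold prob_choose2. 
      change (0 <= rho1 VP p <= 1). lra.
      intro n. apply gval_abs; auto. pose proof (rho1_bounds VP p). change (0 <= rho1 VP p <= 1). lra.
      apply eng_bound. apply eng_bound. }
    apply Rabs_le_between in H. split; nra.
Qed.

Lemma div_mono a a' x y : 0 <= a <= a' -> 0 < x <= y -> a / y <= a' / x.
Proof.
  intros Ha Hx. unfold Rdiv. apply Rmult_le_compat; try lra.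
  apply Rlt_le, Rinv_0_lt_compat; lra. apply Rinv_le_contravar; lra.
Qed.

Lemma hi_util VP dl : 0 <= dl < 1 ->
  filterlim (fun p => p * real (Lim_seq (fun T => pear_val exp_max_util2 VP p dl (vN_hi p) T 0 0)))
    (at_right 0) (locally (1 / (1 - dl))).
Proof.
  intro Hdl. set (c := 1 + exp VP). set (b := exp_max_util2 VP VP).
  assert (Hc : 0 < c) by (unfold c; pose proof (exp_pos VP); lra).
  assert (Hb : 0 < b) by apply util_pos.
  apply squeeze with (f := fun p => (1 - p) / (1 - dl + dl * c * p))
                     (g := fun p => (1 - p + p * (c + b)) / (1 - dl)).
  - eapply fl_eq; [apply (fl_cont0 (fun p => (1 - p) / (1 - dl + dl * c * p))); reg; lra|].
    field. lra.
  - eapply fl_eq; [apply (fl_cont0 (fun p => (1 - p + p * (c + b)) / (1 - dl))); reg; lra|].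
    field. lra.
  - apply ev0. exists 1. split. lra. intros p Hp.
    set (h := vN_hi p). set (A := exp_max_util2 VP h). set (rho := prob_choose2 VP h).
    assert (Hrho : 0 < rho < 1) by exact (rho1_bounds VP p).
    assert (Hrho2 : 1 - rho <= c * p) by exact (one_m_rho1 VP p Hp).
    assert (Hh : p * h = 1 - p) by (unfold h, vN_hi; field; lra).
    assert (Heh : 1 <= exp h).
    { pose proof (exph_ge p Hp). assert (1 <= / p). { rewrite <- Rinv_1. apply Rinv_le_contravar; lra. } fold h in H. lra. }
    assert (HA1 : h <= A).
    { unfold A, exp_max_util2, denom2. rewrite <- (ln_exp h) at 1. apply ln_le. apply exp_pos.
      pose proof (exp_pos VP). lra. }
    assert (HA2 : A <= h + c).
    { unfold A, exp_max_util2, denom2. rewrite <- (ln_exp (h + c)). apply ln_le.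
      pose proof (exp_pos VP); pose proof (exp_pos h); lra.
      rewrite exp_plus. pose proof (exp_ineq1_le c). fold c. nra. }
    assert (HA0 : 0 <= A) by (apply Rlt_le, util_pos).
    rewrite (Lim_seq_ext _ _ (fun T => pear_gval _ VP p dl _ T 0 0)). fold h A b rho.
    assert (Hex : ex_finite_lim_seq (fun T => gval (dp VP p) A b rho dl T 0 0)) by (apply gval_conv; lra).
    split.
    + assert (L : A / (1 - dl * rho) <= real (Lim_seq (fun T => gval (dp VP p) A b rho dl T 0 0))).
      { apply lim_ge with (v := fun T => A * (1 - (dl * rho) ^ T) / (1 - dl * rho)); auto.
        apply geom_lim2. nra. intro n. apply gval_lower; try lra. intro s'. apply dp_s0; auto. }
      assert (0 < 1 - dl * rho) by nra.
      apply Rle_trans with (p * (A / (1 - dl * rho))); [| apply Rmult_le_compat_l; lra].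
      replace (p * (A / (1 - dl * rho))) with ((p * A) / (1 - dl * rho)) by (field; lra).
      apply div_mono. nra. nra.
    + assert (U : real (Lim_seq (fun T => gval (dp VP p) A b rho dl T 0 0)) <= (A + b) / (1 - dl)).
      { apply lim_le_c; auto. intro n. eapply Rle_trans; [apply Rle_abs|]. apply gval_abs; try lra.
        rewrite Rabs_pos_eq; lra. rewrite Rabs_pos_eq; lra. }
      apply Rle_trans with (p * ((A + b) / (1 - dl))); [apply Rmult_le_compat_l; lra|].
      replace (p * ((A + b) / (1 - dl))) with ((p * A + p * b) / (1 - dl)) by (field; lra).
      apply div_mono. nra. lra.
Qed.

Lemma app_lim rew VP dl : 0 <= dl < 1 -> app_obj rew VP dl = rew VP VP / (1 - dl).
Proof.
  intro H. unfold app_obj. rewrite (Lim_seq_ext (fun T => app_val rew VP dl T) (pop (rew VP VP) dl) (app_pop rew VP dl)).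
  rewrite (is_lim_seq_unique _ _ (pop_lim _ _ H)). reflexivity.
Qed.

Lemma fl_1m : filterlim (fun p : R => 1 - p) (at_right 0) (locally 1).
Proof. eapply fl_eq; [apply (fl_cont0 (fun p => 1 - p)); reg|]. ring. Qed.

Lemma fl_cont1 (g : R -> R) : continuity_pt g 1 -> filterlim g (at_left 1) (locally (g 1)).
Proof.
  intro H. apply continuity_pt_filterlim in H. eapply filterlim_filter_le_1; [|exact H].
  apply filter_le_within.
Qed.

Theorem corollary2 (VP : R) (HVP : 0 <= VP) :
  (exists L : R -> R,
     (forall delta, 0 <= delta < 1 ->
        filterlim (fun p => Eng_PEAR VP delta p / Eng_APP VP delta)
                  (at_right 0) (locally (L delta)))
     /\ filterlim L (at_left 1) (locally 1))
  /\
  (exists L : R -> R,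
     (forall delta, 0 <= delta < 1 ->
        filterlim (fun p => Util_PEAR VP delta p / Util_APP VP delta)
                  (at_right 0) (locally (L delta)))
     /\ filterlim L (at_left 1) (locally (1 + 1 / ln (1 + 2 * exp VP)))).
Proof.
  set (q := prob_choose2 VP vN_lo).
  assert (Hq : 0 < q < 1) by exact (q_bounds VP).
  split.
  - set (a := prob_engage2 VP vN_lo). set (b := prob_engage2 VP VP).
    assert (Hb : 0 < b).
    { unfold b, prob_engage2. pose proof (denom_ge1 VP VP).
      assert (1 / denom2 VP VP < 1) by (apply div_lt1; lra). lra. }
    exists (fun dl => ((1 - dl) * a + dl * (1 - q) * b) / ((1 - dl * q) * b)). split.
    + intros dl Hdl. unfold Eng_APP. rewrite (app_lim _ _ _ Hdl). unfold Eng_PEAR, pear_obj.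
      unfold Rdiv at 1.
      eapply fl_eq.
      { apply fl_mult; [|apply filterlim_const].
        apply fl_plus. apply hi_eng; auto. apply fl_mult. apply fl_1m. apply lo_lim; auto. }
      fold a b q. unfold wval. field. repeat split; try lra. nra.
    + eapply fl_eq. apply (fl_cont1 (fun dl => ((1 - dl) * a + dl * (1 - q) * b) / ((1 - dl * q) * b))).
      reg. apply Rmult_integral_contrapositive. split; lra.
      field. lra.
  - set (a := exp_max_util2 VP vN_lo). set (b := exp_max_util2 VP VP).
    assert (Hb : 0 < b) by apply util_pos.
    exists (fun dl => (1 + ((1 - dl) * a + dl * (1 - q) * b) / (1 - dl * q)) / b). split.
    + intros dl Hdl. unfold Util_APP. rewrite (app_lim _ _ _ Hdl). unfold Util_PEAR, pear_obj.
      unfold Rdiv at 1.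
      eapply fl_eq.
      { apply fl_mult; [|apply filterlim_const].
        apply fl_plus. apply hi_util; auto. apply fl_mult. apply fl_1m. apply lo_lim; auto. }
      fold a b q. unfold wval. field. repeat split; try lra. nra.
    + eapply fl_eq. apply (fl_cont1 (fun dl => (1 + ((1 - dl) * a + dl * (1 - q) * b) / (1 - dl * q)) / b)).
      reg; lra.
      replace (1 + 2 * exp VP) with (denom2 VP VP) by (unfold denom2; ring).
      fold (exp_max_util2 VP VP). fold b. field. lra.
Qed.
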